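(* Fix $n\ge 2$, a dictator agent $t$, another agent $i\ne t$, and a constant $a\in(0,\frac12)$. For $b\in(0,1)$ and a profile $\mathbf{x}$ with $x_l=\min\mathbf{x}$, $x_r=\max\mathbf{x}$, $L=x_r-x_l$, define $$h_b(\mathbf{x})=\begin{cases} x_t+\max\left\{\frac{2(1-b)}{b}(x_t-x_l),\; x_r-x_t\right\} & \text{if } x_t\in[x_l,\,x_l+bL),\\[2pt] x_t-\max\left\{x_t-x_l,\; \frac{2b}{1-b}(x_r-x_t)\right\} & \text{if } x_t\in[x_l+bL,\,x_r].\end{cases}$$ Let $f$ be the mechanism that on $\mathbf{x}$ outputs $l_1=x_t$ and $l_2=h_a(\mathbf{x})$ if $x_i\le x_t$, and $l_2=h_{1-a}(\mathbf{x})$ if $x_i>x_t$. Then $f$ is strategy-proof.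
   Context: Two-facility game on a line: agent $j\in\{1,\dots,n\}$ has location $x_j\in\mathbb{R}$. A mechanism outputs two facility locations $\{l_1,l_2\}$; an agent at $y$ has cost $\min\{|l_1-y|,|l_2-y|\}$. A mechanism $f$ is strategy-proof if for every agent $j$, every profile $\mathbf{x}=\langle x_j,\mathbf{x}_{-j}\rangle$ and every $x_j'\in\mathbb{R}$, the cost of agent $j$ (at true location $x_j$) under $f(x_j,\mathbf{x}_{-j})$ is at most her cost under $f(x_j',\mathbf{x}_{-j})$. *)

(* Defs.v *)
From HB Require Import structures.
From mathcomp Require Import all_boot all_order all_algebra.
Set Implicit Arguments. Unset Strict Implicit. Unset Printing Implicit Defensive.
Import Order.TTheory GRing.Theory Num.Theory.
Local Open Scope ring_scope.

Section Defs.
Variables (R : realFieldType) (n : nat).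

Definition profile := 'I_n -> R.

(* min / max of a profile (the seed x j0 is itself an entry, so it is harmless) *)
Definition pmin (j0 : 'I_n) (x : profile) : R := \big[Num.min/x j0]_(j < n) x j.
Definition pmax (j0 : 'I_n) (x : profile) : R := \big[Num.max/x j0]_(j < n) x j.

Definition cost (y : R) (l : R * R) : R := Num.min `|l.1 - y| `|l.2 - y|.

Definition mechanism := profile -> R * R.

Definition upd (x : profile) (j : 'I_n) (x' : R) : profile :=
  fun k => if k == j then x' else x k.

Definition strategy_proof (f : mechanism) : Prop :=
  forall (j : 'I_n) (x : profile) (x' : R),
    cost (x j) (f x) <= cost (x j) (f (upd x j x')).

Definition h (b : R) (t : 'I_n) (x : profile) : R :=
  let xl := pmin t x in
  let xr := pmax t x in
  let L := xr - xl in
  if x t < xl + b * L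
  then x t + Num.max (2 * (1 - b) / b * (x t - xl)) (xr - x t)
  else x t - Num.max (x t - xl) (2 * b / (1 - b) * (xr - x t)).

Definition mech (a : R) (t i : 'I_n) : mechanism :=
  fun x => (x t, if x i <= x t then h a t x else h (1 - a) t x).

End Defs.

(* Main.v *)
Require Import Defs.
From HB Require Import structures.
From mathcomp Require Import all_boot all_order all_algebra ring lra.
Import Order.TTheory GRing.Theory Num.Theory.
Local Open Scope ring_scope.

Section Aux.
Variable R : realFieldType.

Lemma absE (x : R) : (`|x| = x /\ 0 <= x) \/ (`|x| = - x /\ x < 0).
Proof. case: (lerP 0 x) => h; [left; rewrite ger0_norm | right; rewrite ltr0_norm] => //. Qed.

Lemma minE2 (x y : R) : (Num.min x y = x /\ x <= y) \/ (Num.min x y = y /\ y < x).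
Proof. rewrite minEle; case: ifP => h; [left|right]; split => //; move/negbT: h; rewrite -ltNge. done. Qed.

Lemma maxE2 (x y : R) : x <= Num.max x y /\ y <= Num.max x y /\
   (Num.max x y = x \/ Num.max x y = y).
Proof. rewrite maxEle; case: ifP => h; (split; [|split]); try lra; try by [right|left]; move/negbT: h; rewrite -ltNge; lra. Qed.

Lemma core_right (xt y l l' q q' U U' : R) :
  xt < y -> 0 <= q' -> y - xt <= q -> (q <= q' \/ q <= y - xt) -> U <= U' ->
  ((2 * U <= l /\ q <= l /\ (l = 2 * U \/ l = q)) \/ (q <= U /\ l <= 0)) ->
  ((2 * U' <= l' /\ q' <= l') \/ l' <= 0) ->
  Num.min `|xt - y| `|xt + l - y| <= Num.min `|xt - y| `|xt + l' - y|.
Proof.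
move=> h1 h2 h3 h4 h5 H1 H2.
have -> : `|xt - y| = y - xt by rewrite ltr0_norm ?subr_lt0 //; lra.
rewrite le_min ge_min; apply/andP; split; first by apply/orP; left.
case: (lerP (y - xt) `|xt + l' - y|) => hD; first by rewrite ge_min; apply/orP; left.
rewrite ge_min; apply/orP; right.
case: (absE (xt + l - y)) => [[-> f1]|[-> f1]];
case: (absE (xt + l' - y)) => [[e2 f2]|[e2 f2]]; rewrite e2 in hD *;
case: H1 => [[a1 [a2 [a3|a3]]]|[a1 a2]]; case: H2 => [[b1 b2]|b1]; case: h4 => c; lra.
Qed.

Lemma core_left (xt y l l' p p' W W' : R) :
  y < xt -> 0 <= p' -> xt - y <= p -> (p <= p' \/ p <= xt - y) -> W <= W' ->
  ((2 * W <= - l /\ p <= - l /\ (- l = 2 * W \/ - l = p)) \/ (p <= W /\ 0 <= l)) ->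
  ((2 * W' <= - l' /\ p' <= - l') \/ 0 <= l') ->
  Num.min `|xt - y| `|xt + l - y| <= Num.min `|xt - y| `|xt + l' - y|.
Proof.
move=> h1 h2 h3 h4 h5 H1 H2.
have -> : `|xt - y| = xt - y by rewrite ger0_norm //; lra.
rewrite le_min ge_min; apply/andP; split; first by apply/orP; left.
case: (lerP (xt - y) `|xt + l' - y|) => hD; first by rewrite ge_min; apply/orP; left.
rewrite ge_min; apply/orP; right.
case: (absE (xt + l - y)) => [[-> f1]|[-> f1]];
case: (absE (xt + l' - y)) => [[e2 f2]|[e2 f2]]; rewrite e2 in hD *;
case: H1 => [[a1 [a2 [a3|a3]]]|[a1 a2]]; case: H2 => [[b1 b2]|b1]; case: h4 => c; lra.
Qed.

Lemma hform n (b : R) (t : 'I_n) (x : profile R n) p q k :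
  0 < b -> b < 1 -> p = x t - pmin t x -> q = pmax t x - x t -> k = (1 - b) / b ->
  exists l, h b t x = x t + l /\
  ((k * p < q /\ p < q / k /\ 2 * (k * p) <= l /\ q <= l /\ (l = 2 * (k * p) \/ l = q)) \/
   (q <= k * p /\ q / k <= p /\ p <= - l /\ 2 * (q / k) <= - l /\ (- l = p \/ - l = 2 * (q / k)))).
Proof.
move=> b0 b1 ep eq ek.
have b1' : 0 < 1 - b by lra.
have k0 : 0 < k by rewrite ek divr_gt0.
have hmin : pmin t x = x t - p by rewrite ep; ring.
have hmax : pmax t x = q + x t by rewrite eq; ring.
have Ek : k * p = (1 - b) * p / b by rewrite ek; ring.
have Eq : q / k = q * b / (1 - b).
  rewrite ek; field; apply/andP; split; apply/negP => /eqP; lra.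
rewrite /h /= hmin hmax.
have e1 : 2 * (1 - b) / b * (x t - (x t - p)) = 2 * (k * p) by rewrite ek; ring.
have e2 : 2 * b / (1 - b) * (q + x t - x t) = 2 * (q / k) by rewrite Eq; ring.
have e3 : q + x t - x t = q by ring.
have e4 : x t - (x t - p) = p by ring.
rewrite e1 e2 e3 e4.
case: ifP => C.
- exists (Num.max (2 * (k * p)) q); split => //; left.
  have [m1 [m2 m3]] := maxE2 (2 * (k * p)) q.
  split; first by rewrite Ek ltr_pdivrMr //; lra.
  split; first by rewrite Eq ltr_pdivlMr //; lra.
  by [].
- exists (- Num.max p (2 * (q / k))); split; first by ring.
  right; rewrite opprK.
  move/negbT: C; rewrite -leNgt => C.
  have [m1 [m2 m3]] := maxE2 p (2 * (q / k)).
  split; first by rewrite Ek ler_pdivlMr //; lra.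
  split; first by rewrite Eq ler_pdivrMr //; lra.
  by [].
Qed.

Lemma min0_le (A u w : R) : Num.min 0 A <= Num.min `|u| `|w|.
Proof.
apply: (@le_trans _ _ 0); first by rewrite ge_min; apply/orP; left.
by rewrite le_min; apply/andP; split.
Qed.

Section P.
Variables (n : nat) (t : 'I_n).

Lemma pmin_le (x : profile R n) k : pmin t x <= x k.
Proof. exact: bigmin_le. Qed.
Lemma le_pmax (x : profile R n) k : x k <= pmax t x.
Proof. exact: le_bigmax. Qed.

Lemma pmin_att (x : profile R n) : exists m, pmin t x = x m.
Proof.
rewrite /pmin; apply: (big_ind (fun w => exists m, w = x m)); first by exists t.
- move=> u w [m1 ->] [m2 ->]; rewrite minEle; case: ifP => _; by [exists m1|exists m2].
- by move=> k _; exists k.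
Qed.
Lemma pmax_att (x : profile R n) : exists m, pmax t x = x m.
Proof.
rewrite /pmax; apply: (big_ind (fun w => exists m, w = x m)); first by exists t.
- move=> u w [m1 ->] [m2 ->]; rewrite maxEle; case: ifP => _; by [exists m2|exists m1].
- by move=> k _; exists k.
Qed.

Lemma pmaxA (x : profile R n) j v : pmax t x <= pmax t (upd x j v) \/ pmax t x <= x j.
Proof.
have [m ->] := pmax_att x.
case: (eqVneq m j) => [->|hm]; first by right.
left; have := le_pmax (upd x j v) m; by rewrite /upd (negbTE hm).
Qed.
Lemma pminB (x : profile R n) j v : pmin t (upd x j v) <= pmin t x \/ x j <= pmin t x.
Proof.
have [m ->] := pmin_att x.
case: (eqVneq m j) => [->|hm]; first by right.
left; have := pmin_le (upd x j v) m; by rewrite /upd (negbTE hm).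
Qed.
End P.

End Aux.

Theorem theorem7 (R : realFieldType) (n : nat) (hn : (2 <= n)%N)
  (t i : 'I_n) (hit : i != t) (a : R) (ha0 : 0 < a) (ha1 : a < 1 / 2) :
  strategy_proof (mech a t i).
Proof.
move=> j x v; rewrite /cost /mech /=.
case: (eqVneq j t) => [->|hjt].
  by rewrite subrr normr0; apply: min0_le.
have htj : (t == j) = false by rewrite eq_sym (negbTE hjt).
have xt' : upd x j v t = x t by rewrite /upd htj.
rewrite xt'.
set x' := upd x j v.
set bx := if x i <= x t then a else 1 - a.
set bx' := if x' i <= x t then a else 1 - a.
have -> : (if x i <= x t then h a t x else h (1 - a) t x) = h bx t x
  by rewrite /bx; case: ifP.
have -> : (if x' i <= x t then h a t x' else h (1 - a) t x') = h bx' t x'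
  by rewrite /bx'; case: ifP.
have [b0 b1] : 0 < bx /\ bx < 1 by rewrite /bx; case: ifP => _; split; lra.
have [b0' b1'] : 0 < bx' /\ bx' < 1 by rewrite /bx'; case: ifP => _; split; lra.
have [l [-> H]] := @hform R n bx t x _ _ ((1 - bx) / bx) b0 b1 (erefl _) (erefl _) (erefl _).
have [l' [-> H']] := @hform R n bx' t x' _ _ ((1 - bx') / bx') b0' b1' (erefl _) (erefl _) (erefl _).
have xt'' : x' t = x t := xt'.
rewrite xt'' in H' *.
set kx := (1 - bx) / bx in H; set kx' := (1 - bx') / bx' in H'.
have kx0 : 0 < kx by rewrite /kx divr_gt0 //; lra.
have kx0' : 0 < kx' by rewrite /kx' divr_gt0 //; lra.
have ksa : (1 - (1 - a)) / (1 - a) <= (1 - a) / a.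
  apply: (@le_trans _ _ 1).
    by rewrite ler_pdivrMr; lra.
  by rewrite ler_pdivlMr; lra.
have t1 := @pmin_le R n t x t; have t2 := @le_pmax R n t x t.
have t3 := @pmin_le R n t x' t; have t4 := @le_pmax R n t x' t.
rewrite /x' xt' in t3 t4.
have t5 := @pmin_le R n t x j; have t6 := @le_pmax R n t x j.
have A := @pmaxA R n t x j v; have B := @pminB R n t x j v.
rewrite -/x' in A B.
case: (ltgtP (x j) (x t)) => hy; last first.
- rewrite hy subrr normr0 le_min; apply/andP; split; rewrite ge_min; apply/orP; left => //.
-
  have hk : kx <= kx'.
    rewrite /kx /kx' /bx /bx'.
    case: (eqVneq j i) => [ji|ji].
      have xi : x i = x j by rewrite ji.
      rewrite xi (lt_geF hy).
      by case: ifP.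
    have -> : x' i = x i by rewrite /x' /upd eq_sym (negbTE ji).
    by [].
  have hp : x t - pmin t x <= x t - pmin t x' by case: B; lra.
  apply: (@core_right R (x t) (x j) l l' (pmax t x - x t) (pmax t x' - x t)
            (kx * (x t - pmin t x)) (kx' * (x t - pmin t x'))).
  + done.
  + lra.
  + lra.
  + case: A; lra.
  + apply: ler_pM; lra.
  + case: H => [[c1 [c2 [c3 [c4 c5]]]]|[c1 [c2 [c3 [c4 c5]]]]].
    * by left.
    * right; split; lra.
  + case: H' => [[c1 [c2 [c3 [c4 c5]]]]|[c1 [c2 [c3 [c4 c5]]]]].
    * by left.
    * right; lra.
-
  have hk : kx' <= kx.
    rewrite /kx /kx' /bx /bx'.
    case: (eqVneq j i) => [ji|ji].
      have xi : x i = x j by rewrite ji.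
      rewrite xi (ltW hy).
      by case: ifP.
    have -> : x' i = x i by rewrite /x' /upd eq_sym (negbTE ji).
    by [].
  have hq : pmax t x - x t <= pmax t x' - x t by case: A; lra.
  apply: (@core_left R (x t) (x j) l l' (x t - pmin t x) (x t - pmin t x')
            ((pmax t x - x t) / kx) ((pmax t x' - x t) / kx')).
  + done.
  + lra.
  + lra.
  + case: B; lra.
  + apply: ler_pM; try lra.
    * rewrite invr_ge0; lra.
    * by rewrite lef_pV2 ?posrE.
  + case: H => [[c1 [c2 [c3 [c4 c5]]]]|[c1 [c2 [c3 [c4 c5]]]]].
    * right; split; lra.
    * left; split; first lra. split; first lra. case: c5; [right|left]; lra.
  + case: H' => [[c1 [c2 [c3 [c4 c5]]]]|[c1 [c2 [c3 [c4 c5]]]]].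
    * right; lra.
    * left; lra.
Qed.
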